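(* Let $X\subseteq\mathbb{R}^n$ and let $F:X\rightrightarrows\mathbb{R}^m$ be a set-valued function with open graph and nonempty monovex values. Then $F$ has a continuous selection: there is a continuous function $f:X\to\mathbb{R}^m$ with $f(x)\in F(x)$ for every $x\in X$.
   Context: A set $B \subseteq \mathbb{R}^m$ is monovex if for every $x,y \in B$ there is a continuous path $\gamma:[0,1]\to B$ with $\gamma(0)=x$, $\gamma(1)=y$ and each coordinate $\gamma_i$ monotone (nondecreasing or nonincreasing). The graph of $F$ is $\{(x,y)\in X\times\mathbb{R}^m: y\in F(x)\}$, and ''open graph'' means this set is open in $X\times\mathbb{R}^m$. *)

(* Defs.v *)
From HB Require Import structures.
From mathcomp Require Import all_boot all_order all_algebra.
From mathcomp Require Import all_classical all_reals all_analysis.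
Set Implicit Arguments. Unset Strict Implicit. Unset Printing Implicit Defensive.
Import Order.TTheory GRing.Theory Num.Theory numFieldNormedType.Exports.
Local Open Scope classical_set_scope.
Local Open Scope ring_scope.

(* Points of R^k are row vectors 'rV[R]_k with the (sup-)norm topology
   provided by MathComp-Analysis. *)

Definition monotone01 (R : realType) (g : R -> R) : Prop :=
  {in `[0, 1]%R &, {homo g : s t / s <= t}} \/
  {in `[0, 1]%R &, {homo g : s t / s <= t >-> t <= s}}.

Definition monovex (R : realType) (m : nat) (B : set 'rV[R]_m) : Prop :=
  forall x y, B x -> B y ->
    exists gamma : R -> 'rV[R]_m,
      {within `[0, 1]%classic, continuous gamma} /\
      gamma 0 = x /\ gamma 1 = y /\
      (forall t, t \in `[0, 1]%R -> B (gamma t)) /\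
      (forall i : 'I_m, monotone01 (fun t => gamma t ord0 i)).

Definition open_graph (R : realType) (n m : nat) (X : set 'rV[R]_n)
    (F : 'rV[R]_n -> set 'rV[R]_m) : Prop :=
  forall x y, X x -> F x y ->
    exists2 e : R, 0 < e &
      forall x' y', X x' -> `|x' - x| < e -> `|y' - y| < e -> F x' y'.

(* Main.v *)
Require Import Defs.
From HB Require Import structures.
From mathcomp Require Import all_boot all_order all_algebra.
From mathcomp Require Import all_classical all_reals all_analysis.
From mathcomp Require Import ring lra.
Import Order.TTheory GRing.Theory Num.Theory numFieldNormedType.Exports.
Import Num.Def.
Local Open Scope classical_set_scope.
Local Open Scope ring_scope.
Set Implicit Arguments. Unset Strict Implicit. Unset Printing Implicit Defensive.

Lemma rv_coord_le (R : realType) m (M : 'rV[R]_m) i : `|M ord0 i| <= `|M|.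
Proof.
rewrite [X in _ <= X]mx_normrE.
by apply: (le_bigmax _ _ (ord0, i)).
Qed.

Lemma rv_norm_lt (R : realType) m (M : 'rV[R]_m) e : 0 < e ->
  (forall i, `|M ord0 i| < e) -> `|M| < e.
Proof.
move=> e0 H; rewrite [X in X < _]mx_normrE.
apply/bigmax_ltP; split => // -[a b] _ /=.
by rewrite (ord1 a).
Qed.


Definition qn (R : realType) (k : nat) : R :=
  if @unpickle rat k is Some r then ratr r else 0.

Lemma qn_pickle (R : realType) (r : rat) : qn R (pickle r) = ratr r.
Proof. by rewrite /qn pickleK. Qed.

Definition Sset (R : realType) n (X : set 'rV[R]_n) (P : 'rV[R]_n -> set R)
  (k : nat) (x : 'rV[R]_n) : set R :=
  [set e : R | 0 <= e <= 1 /\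
     forall x', X x' -> `|x' - x| < e -> P x' (qn R k)].

Definition psi (R : realType) n X P k x : R := sup (@Sset R n X P k x).

Lemma Sset_sup R n X P k x : has_sup (@Sset R n X P k x).
Proof.
split; first by exists 0; split; [rewrite lexx ler01 | move=> x' _; rewrite normr_lt0].
by exists 1 => e [/andP[]].
Qed.

Lemma psi_ge0 R n X P k x : 0 <= @psi R n X P k x.
Proof.
rewrite /psi; have H := sup_upper_bound (Sset_sup X P k x); apply: H.
by split; [rewrite lexx ler01 | move=> x' _; rewrite normr_lt0].
Qed.

Lemma psi_le1 R n X P k x : @psi R n X P k x <= 1.
Proof.
rewrite /psi; apply: ge_sup; first by case: (Sset_sup X P k x).
by move=> e [/andP[]].
Qed.

Lemma psi_lip R n X P k x y :
  @psi R n X P k x - `|x - y| <= @psi R n X P k y.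
Proof.
rewrite lerBlDr {1}/psi.
apply: ge_sup; first by case: (Sset_sup X P k x).
move=> e [/andP[e0 e1] He].
rewrite -lerBlDr.
have [le|lt] := leP e `|x - y|.
  by apply: le_trans (psi_ge0 X P k y); rewrite subr_le0.
have H := sup_upper_bound (Sset_sup X P k y); apply: H; split.
  rewrite subr_ge0 (ltW lt) /=; apply: le_trans e1; rewrite lerBlDr lerDl //.
move=> x' Xx' d; apply: He => //.
have -> : x' - x = (x' - y) + (y - x) by rewrite addrA subrK.
apply: le_lt_trans (ler_normD _ _) _.
by rewrite (distrC y x); lra.
Qed.

Lemma psi_pos R n X P k x : X x -> 0 < @psi R n X P k x -> P x (qn R k).
Proof.
move=> Xx p0.
have [e [/andP[e0 _] He] lt] := sup_adherent p0 (Sset_sup X P k x).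
apply: He => //; rewrite subrr normr0.
by move: lt; rewrite /psi subrr.
Qed.


Lemma psi_cover (R : realType) n (X : set 'rV[R]_n) (P : 'rV[R]_n -> set R) :
  (forall x c, X x -> P x c -> exists2 e : R, 0 < e &
     forall x' c', X x' -> `|x' - x| < e -> `|c' - c| < e -> P x' c') ->
  (forall x, X x -> exists c, P x c) ->
  forall x, X x -> exists k, 0 < psi X P k x.
Proof.
move=> Hop Hne x Xx.
have [c Pc] := Hne x Xx.
have [e e0 He] := Hop x c Xx Pc.
have /rat_in_itvoo[r] : c - e < c + e by lra.
rewrite in_itv /= => /andP[r1 r2].
have Pr : P x (ratr r).
  apply: He => //; first by rewrite subrr normr0.
  rewrite ltr_norml; apply/andP; split; lra.
have [e' e'0 He'] := Hop x _ Xx Pr.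
exists (pickle r).
apply: (@lt_le_trans _ _ (minr e' 1)); first by rewrite lt_min e'0 ltr01.
rewrite /psi; have H := sup_upper_bound (Sset_sup X P (pickle r) x); apply: H.
split; first by rewrite ge_min lexx orbT andbT le_min (ltW e'0) ler01.
move=> x' Xx' d; rewrite qn_pickle; apply: He' => //.
  by apply: lt_le_trans d _; rewrite ge_min lexx.
by rewrite subrr normr0.
Qed.

Definition vw (R : realType) n X P (k : nat) (x : 'rV[R]_n) : R :=
  maxr 0 (@psi R n X P k x - k%:R * \sum_(j < k) @psi R n X P j x).

Lemma vw_ge0 R n X P k x : 0 <= @vw R n X P k x.
Proof. by rewrite /vw le_max lexx. Qed.

Lemma sum_psi_ge0 R n X P k x : 0 <= \sum_(j < k) @psi R n X P j x.
Proof. by apply: sumr_ge0 => j _; apply: psi_ge0. Qed.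

Lemma vw_pos R n X P k x : 0 < @vw R n X P k x -> 0 < @psi R n X P k x.
Proof.
rewrite /vw lt_max ltxx /= => H; apply: lt_le_trans H _.
rewrite lerBlDr lerDl; apply: mulr_ge0 => //; exact: sum_psi_ge0.
Qed.

Lemma sum_ge_one (R : realType) K (F : 'I_K -> R) j :
  (forall k, 0 <= F k) -> F j <= \sum_(k < K) F k.
Proof.
move=> H; rewrite (bigD1 j) //= lerDl; apply: sumr_ge0 => k _; exact: H.
Qed.

Lemma local_fin R n X P j0 x0 : 0 < @psi R n X P j0 x0 ->
  exists K, forall x, `|x0 - x| < psi X P j0 x0 / 2 ->
     forall k, (K <= k)%N -> @vw R n X P k x = 0.
Proof.
set p := psi X P j0 x0 => p0.
exists (maxn j0.+1 (Num.truncn (2 / p)).+1) => x d k.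
rewrite geq_max => /andP[jk tk].
have hx : p / 2 < psi X P j0 x by have := psi_lip X P j0 x0 x; rewrite -/p; lra.
have hs : psi X P j0 x <= \sum_(j < k) psi X P j x.
  have := @sum_ge_one R k (fun j : 'I_k => psi X P j x) (Ordinal jk).
  by apply => j; apply: psi_ge0.
have hk : 2 / p < k%:R.
  apply: lt_le_trans (Num.Theory.truncnS_gt _) _.
  by rewrite ler_nat.
have h1 : 1 < k%:R * (p / 2).
  have e1 : (2 / p) * (p / 2) = 1 by field; rewrite gt_eqF.
  by rewrite -[X in X < _]e1 ltr_pM2r ?divr_gt0.
have h2 : k%:R * (p / 2) <= k%:R * \sum_(j < k) psi X P j x.
  by rewrite ler_wpM2l //; lra.
rewrite /vw; apply: max_l.
have := psi_le1 X P k x; lra.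
Qed.


Lemma avg_le (R : realType) K (w q : nat -> R) :
  (forall k, 0 <= w k) -> (exists2 j, (j < K)%N & 0 < w j) ->
  exists k, [/\ (k < K)%N, 0 < w k &
    q k <= (\sum_(i < K) w i * q i) / (\sum_(i < K) w i)].
Proof.
move=> w0 [j jK wj].
set D := \sum_(i < K) w i; set N := \sum_(i < K) w i * q i.
have D0 : 0 < D.
  apply: lt_le_trans wj _.
  exact: (@sum_ge_one R K (fun i : 'I_K => w i) (Ordinal jK)).
set t := N / D.
apply: contrapT => Hn.
have H : forall i : 'I_K, 0 <= w i * (q i - t).
  move=> i; have [wi0|wle] := ltP 0 (w i).
    apply: mulr_ge0; first exact: ltW.
    rewrite subr_ge0; apply: contrapT => /negP; rewrite -ltNge => lt.
    by apply: Hn; exists i; split => //; apply: ltW.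
  have -> : w i = 0 by apply/eqP; rewrite eq_le wle w0.
  by rewrite mul0r.
have Hj : 0 < w j * (q j - t).
  apply: mulr_gt0 => //; rewrite subr_gt0; rewrite ltNge; apply/negP => le.
  by apply: Hn; exists j.
have : 0 < \sum_(i < K) w i * (q i - t).
  apply: lt_le_trans Hj _.
  exact: (@sum_ge_one R K (fun i : 'I_K => w i * (q i - t)) (Ordinal jK)).
have -> : \sum_(i < K) w i * (q i - t) = N - t * D.
  rewrite /N /D mulr_sumr -sumrB; apply: eq_bigr => i _; ring.
by rewrite /t divfK ?gt_eqF // subrr ltxx.
Qed.

Definition Dsum (R : realType) n X P (K : nat) (x : 'rV[R]_n) : R :=
  \sum_(k < K) @vw R n X P k x.
Definition Nsum (R : realType) n X P (K : nat) (x : 'rV[R]_n) : R :=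
  \sum_(k < K) @vw R n X P k x * qn R k.
Definition stable (R : realType) n X P (K : nat) (x : 'rV[R]_n) : Prop :=
  forall k, (K <= k)%N -> @vw R n X P k x = 0.

Lemma stable_add R n X P K x : @stable R n X P K x -> forall d,
  Dsum X P (K + d) x = Dsum X P K x /\ Nsum X P (K + d) x = Nsum X P K x.
Proof.
move=> st; elim=> [|d [IH1 IH2]]; first by rewrite addn0.
rewrite /Dsum /Nsum addnS !big_ord_recr /= st ?leq_addr //.
by rewrite -/(Dsum _ _ _ _) -/(Nsum _ _ _ _) IH1 IH2 mul0r !addr0.
Qed.

Lemma stable_eq R n X P K1 K2 x : @stable R n X P K1 x -> stable X P K2 x ->
  Dsum X P K1 x = Dsum X P K2 x /\ Nsum X P K1 x = Nsum X P K2 x.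
Proof.
wlog le : K1 K2 / (K1 <= K2)%N.
  move=> Hw s1 s2; have [l|l] := leqP K1 K2; first exact: Hw.
  by have [-> ->] := Hw K2 K1 (ltnW l) s2 s1.
move=> s1 _; rewrite -(subnKC le).
by have [-> ->] := stable_add s1 (K2 - K1).
Qed.

Lemma Dsum_pos R n X P K x : (exists j, 0 < @psi R n X P j x) ->
  stable X P K x -> 0 < Dsum X P K x.
Proof.
move=> exP st.
have exP' : exists j, 0 < psi X P j x by [].
case: (ex_minnP exP') => j pj jmin.
have vj : vw X P j x = psi X P j x.
  rewrite /vw.
  have -> : \sum_(i < j) psi X P i x = 0.
    apply: big1 => i _; apply/eqP; rewrite eq_le psi_ge0 andbT leNgt.
    by apply/negP => /jmin; rewrite leqNgt ltn_ord.
  by rewrite mulr0 subr0; apply: max_r; apply: psi_ge0.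
have jK : (j < K)%N.
  rewrite ltnNge; apply/negP => /st; rewrite vj => e.
  by move: pj; rewrite e ltxx.
apply: lt_le_trans pj _; rewrite -vj.
exact: (@sum_ge_one R K (fun i : 'I_K => vw X P i x) (Ordinal jK) (fun i => vw_ge0 X P i x)).
Qed.


Lemma psi_cont (R : realType) n X P k (x : 'rV[R]_n) : {for x, continuous (@psi R n X P k)}.
Proof.
apply/(@cvgrPdist_lt _ _ _ (nbhs x) (nbhs_filter x)) => e e0.
apply/nbhs_ballP; exists e => // y; rewrite -ball_normE /= => xy.
have h1 := psi_lip X P k x y; have h2 := psi_lip X P k y x.
rewrite (distrC y x) in h2.
rewrite ltr_norml; apply/andP; split; lra.
Qed.

Lemma cont_sum (R : realType) n K (F : nat -> 'rV[R]_n -> R) x :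
  (forall k, {for x, continuous (F k)}) ->
  {for x, continuous (fun y => \sum_(k < K) F k y)}.
Proof.
move=> H; elim: K => [|K IH].
  have -> : (fun y => \sum_(k < 0) F k y) = fun=> 0.
    by apply/funext => y; rewrite big_ord0.
  exact: cst_continuous.
have -> : (fun y => \sum_(k < K.+1) F k y) = (fun y => \sum_(k < K) F k y) + F K.
  by apply/funext => y; rewrite big_ord_recr.
exact: continuousD.
Qed.

Lemma vw_cont (R : realType) n X P k (x : 'rV[R]_n) : {for x, continuous (@vw R n X P k)}.
Proof.
have -> : @vw R n X P k = (fun=> 0) \max
   (fun y => psi X P k y - k%:R * \sum_(j < k) psi X P j y).
  by apply/funext => y.
apply: continuous_max; first exact: cst_continuous.
apply: continuousB; first exact: psi_cont.
apply: (@continuousM _ _ (fun=> k%:R)); first exact: cst_continuous.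
apply: cont_sum => j; exact: psi_cont.
Qed.

Lemma g_cont (R : realType) n X P K (x : 'rV[R]_n) : Dsum X P K x != 0 ->
  {for x, continuous (fun y => @Nsum R n X P K y / @Dsum R n X P K y)}.
Proof.
move=> D0.
apply: (@continuousM _ _ (@Nsum R n X P K) (fun y => (@Dsum R n X P K y)^-1)).
  apply: (@cont_sum R n K (fun k y => @vw R n X P k y * qn R k)) => k.
  apply: (@continuousM _ _ (@vw R n X P k) (fun=> qn R k)); first exact: vw_cont.
  exact: cst_continuous.
apply: (continuousV (s := @Dsum R n X P K) D0).
apply: (@cont_sum R n K (fun k y => @vw R n X P k y)) => k; exact: vw_cont.
Qed.


Lemma sel1 (R : realType) n (X : set 'rV[R]_n) (P : 'rV[R]_n -> set R) :
  (forall x c, X x -> P x c -> exists2 e : R, 0 < e &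
     forall x' c', X x' -> `|x' - x| < e -> `|c' - c| < e -> P x' c') ->
  (forall x, X x -> exists c, P x c) ->
  (forall x a b c, X x -> P x a -> P x b -> a <= c <= b -> P x c) ->
  exists f : 'rV[R]_n -> R,
    {within X, continuous f} /\ (forall x, X x -> P x (f x)).
Proof.
move=> Hop Hne Hconv.
pose Kx x := xget 0%N [set K | stable X P K x].
pose f x := Nsum X P (Kx x) x / Dsum X P (Kx x) x.
have stK : forall x j, 0 < psi X P j x -> stable X P (Kx x) x.
  move=> x j pj; apply: (@xgetPex _ 0%N [set K | stable X P K x]).
  have [K HK] := local_fin pj; exists K => k Kk; apply: HK => //.
  by rewrite subrr normr0 divr_gt0.
exists f; split.
  rewrite continuous_subspace_in => x0; rewrite inE => Xx0.
  apply: continuous_subspaceT_for => //.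
  have [j0 pj0] := psi_cover Hop Hne Xx0.
  have [K HK] := local_fin pj0.
  have stx0 : stable X P K x0.
    by move=> k Kk; apply: HK => //; rewrite subrr normr0 divr_gt0.
  pose g y := Nsum X P K y / Dsum X P K y.
  have fg0 : f x0 = g x0.
    by rewrite /f /g; have [-> ->] := stable_eq (stK _ _ pj0) stx0.
  have gc : {for x0, continuous g}.
    by apply: g_cont; rewrite gt_eqF // Dsum_pos //; exists j0.
  have near_fg : \forall y \near x0, g y = f y.
    apply/nbhs_ballP; exists (psi X P j0 x0 / 2); first by rewrite /= divr_gt0.
    move=> y; rewrite -ball_normE /= => d.
    have pjy : 0 < psi X P j0 y.
      by have := psi_lip X P j0 x0 y; lra.
    have sty : stable X P K y by move=> k Kk; apply: HK.
    by rewrite /f /g; have [-> ->] := stable_eq (stK _ _ pjy) sty.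
  rewrite /prop_for /continuous_at /from_subspace fg0.
  exact: (cvg_trans (near_eq_cvg near_fg) gc).
move=> x Xx.
have [j pj] := psi_cover Hop Hne Xx.
have st := stK _ _ pj.
have D0 := Dsum_pos (ex_intro _ j pj) st.
have exj : exists2 j, (j < Kx x)%N & 0 < vw X P j x.
  apply: contrapT => Hn; move: D0; rewrite /Dsum big1 ?ltxx // => i _.
  apply/eqP; rewrite eq_le vw_ge0 andbT leNgt; apply/negP => vi.
  by apply: Hn; exists i.
have w0 : forall k, 0 <= vw X P k x by move=> k; apply: vw_ge0.
have [k1 [_ v1 q1]] := avg_le (qn R) w0 exj.
have [k2 [_ v2 q2]] := avg_le (fun k => - qn R k) w0 exj.
apply: (Hconv x (qn R k1) (qn R k2)) => //.
- exact: psi_pos (vw_pos v1).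
- exact: psi_pos (vw_pos v2).
rewrite q1 /=.
move: q2; rewrite /f /Nsum /Dsum.
have -> : \sum_(i < Kx x) vw X P i x * - qn R i =
          - \sum_(i < Kx x) vw X P i x * qn R i.
  by rewrite -sumrN; apply: eq_bigr => i _; rewrite mulrN.
by rewrite mulNr lerN2.
Qed.


Lemma within_cont_eps (R : realType) n m (X : set 'rV[R]_n)
  (g : 'rV[R]_n -> 'rV[R]_m) : {within X, continuous g} ->
  forall x, X x -> forall e, 0 < e -> exists2 d, 0 < d &
    forall x', X x' -> `|x - x'| < d -> `|g x - g x'| < e.
Proof.
move=> /subspace_continuousP gc x Xx e e0.
have := gc x Xx; move/(@cvgrPdist_lt _ _ _ _ (within_filter _ _)) => /(_ e e0).
case/nbhs_ballP => d d0 H; exists d => // x' Xx' xx'.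
apply: H => //; by rewrite -ball_normE.
Qed.

Lemma mono_const (R : realType) (h : R -> R) :
  monotone01 h -> h 0 = h 1 -> forall t, t \in `[0, 1] -> h t = h 0.
Proof.
have i0 : (0:R) \in `[0, 1] by rewrite in_itv /= lexx ler01.
have i1 : (1:R) \in `[0, 1] by rewrite in_itv /= lexx ler01.
move=> [H|H] e t ti; have := ti; rewrite in_itv /= => /andP[t0 t1].
  have a := H 0 t i0 ti t0; have b := H t 1 ti i1 t1.
  by apply/eqP; rewrite eq_le a andbT e.
have a := H 0 t i0 ti t0; have b := H t 1 ti i1 t1.
by apply/eqP; rewrite eq_le a /= e.
Qed.


Lemma induct_sel (R : realType) (n m : nat) (X : set 'rV[R]_n)
    (F : 'rV[R]_n -> set 'rV[R]_m) :
  open_graph X F ->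
  (forall x, X x -> F x !=set0 /\ monovex (F x)) ->
  forall k, (k <= m)%N -> exists g : 'rV[R]_n -> 'rV[R]_m,
    {within X, continuous g} /\
    (forall x, X x -> exists y, F x y /\
       forall i : 'I_m, (i < k)%N -> y ord0 i = g x ord0 i).
Proof.
move=> Hog Hnm; elim=> [_|k IH km].
  exists (fun=> 0); split; first exact: cst_continuous.
  by move=> x Xx; have [[y Fy] _] := Hnm x Xx; exists y; split.
have [g [gc Hg]] := IH (ltnW km).
pose i0 := Ordinal km.
pose P x c := exists y, F x y /\ (forall i : 'I_m, (i < k)%N -> y ord0 i = g x ord0 i)
   /\ y ord0 i0 = c.
have Hne : forall x, X x -> exists c, P x c.
  move=> x Xx; have [y [Fy Hy]] := Hg x Xx.
  by exists (y ord0 i0); exists y.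
have Hconv : forall x a b c, X x -> P x a -> P x b -> a <= c <= b -> P x c.
  move=> x a b c Xx [y1 [F1 [H1 e1]]] [y2 [F2 [H2 e2]]] /andP[ac cb].
  have [_ mv] := Hnm x Xx.
  have [gam [gamc [g0 [g1 [gamF gamM]]]]] := mv y1 y2 F1 F2.
  have hc : {within `[0, 1], continuous (fun t => gam t ord0 i0)}.
    move=> t; exact: (continuous_comp (gamc t) (@coord_continuous _ _ _ ord0 i0 _)).
  have hv : minr (gam 0 ord0 i0) (gam 1 ord0 i0) <= c <=
             maxr (gam 0 ord0 i0) (gam 1 ord0 i0).
    by rewrite g0 g1 e1 e2 ge_min ac le_max cb orbT.
  have [t ti ht] := @IVT R (fun t => gam t ord0 i0) 0 1 c ler01 hc hv.
  exists (gam t); split; first exact: gamF.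
  split => // i ik.
  have := @mono_const R (fun t => gam t ord0 i) (gamM i).
  rewrite /= g0 g1 H1 // H2 // => /(_ erefl t ti) ->.
  by [].
have Hop : forall x c, X x -> P x c -> exists2 e : R, 0 < e &
     forall x' c', X x' -> `|x' - x| < e -> `|c' - c| < e -> P x' c'.
  move=> x c Xx [y [Fy [Hy ey]]].
  have [e e0 He] := Hog x y Xx Fy.
  have [d d0 Hd] := within_cont_eps gc Xx e0.
  exists (minr e d); first by rewrite lt_min e0 d0.
  move=> x' c' Xx' xx' cc'.
  pose y' := \row_j (if (j < k)%N then g x' ord0 j
                     else if j == i0 then c' else y ord0 j).
  exists y'; split; last split.
  - apply: He => //.
      by apply: lt_le_trans xx' _; rewrite ge_min lexx.
    apply: rv_norm_lt => // j; rewrite !mxE.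
    case: ifP => jk.
      rewrite Hy //.
      have := @rv_coord_le R m (g x' - g x) j; rewrite !mxE => h.
      apply: le_lt_trans h _; rewrite distrC; apply: Hd => //.
      by rewrite distrC; apply: lt_le_trans xx' _; rewrite ge_min lexx orbT.
    case: ifP => /eqP ji; last by rewrite subrr normr0.
    by rewrite ji ey; apply: lt_le_trans cc' _; rewrite ge_min lexx.
  - by move=> i ik; rewrite mxE ik.
  - by rewrite mxE ltnn eqxx.
have [f [fc Hf]] := sel1 Hop Hne Hconv.
pose g' x := g x + (f x - g x ord0 i0) *: (delta_mx ord0 i0 : 'rV[R]_m).
exists g'; split.
  move=> x; apply: (@continuousD R _ (subspace X) g
     (fun y => (f y - g y ord0 i0) *: (delta_mx ord0 i0 : 'rV[R]_m)) x).
    exact: gc.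
  apply: (@continuousZr_tmp R _ (subspace X) (fun y => f y - g y ord0 i0)).
  apply: (@continuousB R _ (subspace X) f (fun y => g y ord0 i0)); first exact: fc.
  exact: (continuous_comp (gc x) (@coord_continuous _ _ _ ord0 i0 _)).
move=> x Xx; have [y [Fy [Hy ey]]] := Hf x Xx.
exists y; split => // i ik.
rewrite /g' !mxE /=.
have [ii0|ii0] := eqVneq i i0.
  by rewrite ii0 ey mulr1 addrC subrK.
rewrite mulr0 addr0 Hy //.
rewrite ltnS leq_eqVlt in ik; case/orP: ik => // /eqP ik.
by move: ii0; rewrite (_ : i = i0) ?eqxx //; apply/val_inj.
Qed.

Theorem lemma3 (R : realType) (n m : nat) (X : set 'rV[R]_n)
    (F : 'rV[R]_n -> set 'rV[R]_m) :
  open_graph X F ->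
  (forall x, X x -> F x !=set0 /\ monovex (F x)) ->
  exists f : 'rV[R]_n -> 'rV[R]_m,
    {within X, continuous f} /\ (forall x, X x -> F x (f x)).
Proof.
move=> Hog Hnm.
have [g [gc Hg]] := induct_sel Hog Hnm (leqnn m).
exists g; split => // x Xx.
have [y [Fy Hy]] := Hg x Xx.
suff -> : g x = y by [].
by apply/rowP => i; rewrite Hy.
Qed.
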